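(* Let $H$, $L$ be as in the context and let $(S,\mathcal T_0)$ be a feasible solution, with associated layers $\mathcal T_0,\dots,\mathcal T_{L-1}$. Let $k$ be an integer with $1\le k\le L-1$, and let $H^{(S,k)}=H+\phi^{S}(H)+\phi^{2S}(H)+\cdots+\phi^{(k-1)S}(H)$ (sum of integer matrices). Then $d(S,\mathcal T_0)\ge k$ if and only if $H^{(S,k)}_{\mathcal T_0}$ is a binary matrix (all entries in $\{0,1\}$) and $\omega\big(H^{(S,k)}_{\mathcal T_0}\big)=1$.
   Context: Notation: for a nonnegative integer $n$, $[n)=\{0,1,\dots,n-1\}$. Let $M,N,Z$ be positive integers and let $H$ be a binary $MZ\times NZ$ matrix made of $M\times N$ blocks $H_{m,n}$ ($m\in[M)$, $n\in[N)$), each of which is a $Z\times Z$ circulant (row $i$ of the block is the cyclic right shift by $i$ of its row $0$). Assume $H$ has no zero row and no two identical rows. Rows of $H$ are indexed by $[MZ)$, columns by $[NZ)$. For a vector $x=(x_0,\dots,x_{Z-1})$ and an integer $s$, $\lambda^s(x)=(x_{(-s)\bmod Z},x_{(1-s)\bmod Z},\dots,x_{(Z-1-s)\bmod Z})$. For a row vector $y$ of length $NZ$ split into $N$ consecutive pieces $y^{(0)},\dots,y^{(N-1)}$ of length $Z$, $\phi^s(y)=(\lambda^s(y^{(0)}),\dots,\lambda^s(y^{(N-1)}))$; for a matrix $A$ with $NZ$ columns, $\phi^s(A)$ applies $\phi^s$ to every row. For an ordered subset $\mathcal A\subseteq[MZ)$, $A_{\mathcal A}$ denotes the matrix formed, in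 order, by the rows of a matrix $A$ with indices in $\mathcal A$. For a matrix $A$, $\omega_j(A)$ is the Hamming weight of column $j$ and $\omega(A)=\max_j\omega_j(A)$ (with $\omega$ of the empty matrix equal to $0$). Fix an integer $L>1$. A feasible solution is a pair $(S,\mathcal T_0)$ with $S$ a positive integer and $\mathcal T_0$ an ordered subset of $[MZ)$ such that there exist ordered subsets $\mathcal T_1,\dots,\mathcal T_{L-1}$ of $[MZ)$ with $\mathcal T_0,\dots,\mathcal T_{L-1}$ pairwise disjoint, $\bigcup_{l\in[L)}\mathcal T_l=[MZ)$, and $H_{\mathcal T_l}=\phi^{lS}(H_{\mathcal T_0})$ for all $l\in[L)$. The layer distance $d(S,\mathcal T_0)$ is the largest $l\in[L)$ such that the matrix obtained by stacking $H_{\mathcal T_0},H_{\mathcal T_1},\dots,H_{\mathcal T_{l-1}}$ vertically has maximum column weight at most $1$ (for $l=0$ the stack is empty with weight $0$). *)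

(* Defs.v *)
From mathcomp Require Import all_boot all_order all_algebra.
Set Implicit Arguments. Unset Strict Implicit. Unset Printing Implicit Defensive.
Import GRing.Theory Num.Theory.
Local Open Scope ring_scope.

Definition binary_mx (m n : nat) (A : 'M[int]_(m, n)) : Prop :=
  forall i j, A i j = 0 \/ A i j = 1.

(* H (of size MZ x NZ) is made of M x N blocks of size Z x Z, each circulant:
   row r of block (m,n) is the cyclic right shift by r of row 0 of that block,
   i.e. entry (r, c) of the block equals entry (0, (c - r) mod Z). *)
Definition circulant_blocks (M N Z : nat) (H : 'M[int]_(M * Z, N * Z)) : Prop :=
  forall (i : 'I_(M * Z)) (j : 'I_(N * Z)),
    H i j = H (insubd i ((i %/ Z) * Z)%N)
              (insubd j ((j %/ Z) * Z + (j %% Z + Z - i %% Z) %% Z)%N).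

Definition shift_col (N Z s : nat) (j : 'I_(N * Z)) : 'I_(N * Z) :=
  insubd j ((j %/ Z) * Z + (j %% Z + Z - s %% Z) %% Z)%N.

Definition phi (N Z s : nat) (m : nat) (A : 'M[int]_(m, N * Z)) : 'M[int]_(m, N * Z) :=
  \matrix_(i < m, j < N * Z) A i (@shift_col N Z s j).

Definition subrows (m n : nat) (A : 'M[int]_(m, n)) (T : seq 'I_m) : 'M[int]_(size T, n) :=
  rowsub (fun i : 'I_(size T) => tnth (in_tuple T) i) A.

(* Hamming weight of column j, and maximal column weight (0 for no columns). *)
Definition col_weight (m n : nat) (A : 'M[int]_(m, n)) (j : 'I_n) : nat :=
  #|[set i : 'I_m | A i j != 0]|.

Definition omega (m n : nat) (A : 'M[int]_(m, n)) : nat :=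
  (\max_(j < n) col_weight A j)%N.

Definition layers (M N Z L S : nat) (H : 'M[int]_(M * Z, N * Z))
    (Ts : seq (seq 'I_(M * Z))) : Prop :=
  [/\ size Ts = L,
      (forall l, (l < L)%N -> uniq (nth [::] Ts l)),
      (forall l l', (l < L)%N -> (l' < L)%N -> l != l' ->
          forall x, x \in nth [::] Ts l -> x \notin nth [::] Ts l'),
      (forall x : 'I_(M * Z), exists2 l, (l < L)%N & x \in nth [::] Ts l) &
      (forall l, (l < L)%N ->
         exists e : size (nth [::] Ts l) = size (nth [::] Ts 0),
           castmx (e, erefl) (subrows H (nth [::] Ts l))
           = @phi N Z (l * S) _ (subrows H (nth [::] Ts 0)))].

(* layer distance: largest l in [L) such that stacking H_{T_0},...,H_{T_{l-1}}
   has maximum column weight at most 1 (l = 0 always qualifies). *)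
Definition layer_distance (M N Z L : nat) (H : 'M[int]_(M * Z, N * Z))
    (Ts : seq (seq 'I_(M * Z))) : nat :=
  (\max_(l < L | (omega (subrows H (flatten (take l Ts))) <= 1)%N) (l : nat))%N.

Definition Hsum (M N Z S k : nat) (H : 'M[int]_(M * Z, N * Z)) : 'M[int]_(M * Z, N * Z) :=
  \sum_(l < k) @phi N Z (l * S) _ H.

(* Main.v *)
Require Import Defs.
From mathcomp Require Import all_boot all_order all_algebra zify.
Local Open Scope ring_scope.

Lemma colw (m n : nat) (A : 'M[int]_(m, n)) j :
  col_weight A j = (\sum_(i < m) (A i j != 0))%N.
Proof.
rewrite /col_weight -sum1_card big_mkcond; apply: eq_bigr => i _.
by rewrite inE; case: (A i j != 0).
Qed.

Lemma colw_sub (m n : nat) (A : 'M[int]_(m, n)) (s : seq 'I_m) j :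
  col_weight (subrows A s) j = count (fun x => A x j != 0) s.
Proof.
rewrite colw -sum1_count big_tnth [RHS]big_mkcond; apply: eq_bigr => i _.
by rewrite /subrows mxE; case: (A _ j != 0).
Qed.

Lemma colw_cast (m1 m2 n : nat) (e : m1 = m2) (A : 'M[int]_(m1, n)) j :
  col_weight (castmx (e, erefl n) A) j = col_weight A j.
Proof. by case: m2 / e; rewrite castmx_id. Qed.

Lemma count_flat_take (T : Type) (p : pred T) (Ts : seq (seq T)) k :
  (k <= size Ts)%N ->
  count p (flatten (take k Ts)) = (\sum_(l < k) count p (nth [::] Ts l))%N.
Proof.
elim: k => [|k IH] hk; first by rewrite take0 big_ord0.
rewrite (take_nth [::] hk) flatten_rcons count_cat IH ?(ltnW hk) //.
by rewrite big_ord_recr.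
Qed.

Lemma sum_prefix (f : nat -> nat) k l : (k <= l)%N ->
  (\sum_(i < k) f i <= \sum_(i < l) f i)%N.
Proof.
move=> kl; rewrite -!(big_mkord xpredT) (big_cat_nat (leq0n k) kl) /=.
exact: leq_addr.
Qed.

Lemma shift0 N Z (j : 'I_(N * Z)) : (0 < Z)%N -> shift_col 0 j = j.
Proof.
move=> Z0; apply: val_inj; rewrite /shift_col val_insubd.
rewrite mod0n subn0 modnDr modn_mod -divn_eq.
by rewrite ltn_ord.
Qed.

Lemma sumPosz (I : finType) (f : I -> nat) :
  (\sum_(i : I) (f i)%:Z) = (\sum_(i : I) f i)%N%:Z.
Proof. by rewrite (big_morph Posz PoszD (erefl (Posz 0))). Qed.

Lemma omega_le (m n : nat) (A : 'M[int]_(m, n)) b :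
  (omega A <= b)%N <-> (forall j, col_weight A j <= b)%N.
Proof.
split; first by move=> h j; apply: leq_trans h; exact: (leq_bigmax j).
by move=> h; apply/bigmax_leqP => j _; exact: h.
Qed.

Theorem theorem1 (M N Z L : nat) (H : 'M[int]_(M * Z, N * Z))
    (S : nat) (T0 : seq 'I_(M * Z)) (Ts : seq (seq 'I_(M * Z))) (k : nat) :
  (0 < M)%N -> (0 < N)%N -> (0 < Z)%N -> (1 < L)%N ->
  binary_mx H ->
  circulant_blocks H ->
  (forall i : 'I_(M * Z), exists j, H i j != 0) ->
  (forall i i' : 'I_(M * Z), row i H = row i' H -> i = i') ->
  (0 < S)%N ->
  nth [::] Ts 0 = T0 ->
  layers L S H Ts ->
  (1 <= k)%N -> (k <= L - 1)%N ->
  (k <= layer_distance L H Ts)%N <->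
  (binary_mx (subrows (Hsum S k H) T0) /\ omega (subrows (Hsum S k H) T0) = 1%N).
Proof.
move=> M0 N0 Z0 L1 Hbin _ Hnz _ _ HT0 [Hsz _ _ Hcov Hlay] k1 kL.
subst T0.
pose t := tnth (in_tuple (nth [::] Ts 0)).
pose c l (r : 'I_(size (nth [::] Ts 0))) j := (H (t r) (@shift_col N Z (l * S) j) != 0).
pose s r j := (\sum_(l < k) c l r j)%N.
have kL' : (k < L)%N by lia.
have Fcount : forall l j, (l < L)%N -> count (fun x => H x j != 0) (nth [::] Ts l)
    = (\sum_(r < size (nth [::] Ts 0)) c l r j)%N.
  move=> l j hl; have [e He] := Hlay l hl.
  rewrite -colw_sub -(@colw_cast _ _ _ e) He colw; apply: eq_bigr => r _.
  by rewrite /phi !mxE.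
have Fstack : forall l j, (l <= L)%N ->
    col_weight (subrows H (flatten (take l Ts))) j
    = (\sum_(i < l) \sum_(r < size (nth [::] Ts 0)) c i r j)%N.
  move=> l j hl; rewrite colw_sub count_flat_take ?Hsz //; apply: eq_bigr => i _.
  apply: Fcount; exact: leq_trans (ltn_ord i) hl.
have Fmono : forall l l', (l <= l')%N -> (l' <= L)%N ->
    (omega (subrows H (flatten (take l Ts))) <= omega (subrows H (flatten (take l' Ts))))%N.
  move=> l l' ll' hl'; apply/bigmax_leqP => j _; apply: leq_trans (leq_bigmax j).
  rewrite Fstack; last exact: leq_trans hl'.
  rewrite Fstack // -!(big_mkord xpredT (fun i => \sum_(r < size (nth [::] Ts 0)) c i r j)%N) (big_cat_nat (leq0n l) ll') /=; exact: leq_addr.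

have Step1 : (k <= layer_distance L H Ts)%N <->
    (omega (subrows H (flatten (take k Ts))) <= 1)%N.
  split.
  - move=> hk; apply/negP => /negP; rewrite -ltnNge => bad.
    have : (layer_distance L H Ts <= k.-1)%N.
      apply/bigmax_leqP => l hl; rewrite leqNgt; apply/negP => lk.
      have lk' : (k <= l)%N by lia.
      have := leq_trans (Fmono k l lk' (ltnW (ltn_ord l))) hl.
      by rewrite leqNgt bad.
    lia.
  - move=> hk; rewrite /layer_distance.
    exact: (leq_bigmax_cond (F:=fun l : 'I_L => nat_of_ord l) (Ordinal kL') hk).
have Fsum : forall r j, subrows (Hsum S k H) (nth [::] Ts 0) r j = (s r j)%:Z.
  move=> r j; rewrite /subrows mxE /Hsum summxE /s -sumPosz; apply: eq_bigr => l _.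
  rewrite /phi mxE /c; by case: (Hbin (t r) (@shift_col N Z (l * S) j)) => ->.
have Fcw : forall j, col_weight (subrows (Hsum S k H) (nth [::] Ts 0)) j
    = (\sum_r (s r j != 0%N))%N.
  by move=> j; rewrite colw; apply: eq_bigr => r _; rewrite Fsum.
have Fst : forall j, col_weight (subrows H (flatten (take k Ts))) j = (\sum_r s r j)%N.
  by move=> j; rewrite Fstack ?(ltnW kL') // exchange_big.
have Fpos : (1 <= omega (subrows (Hsum S k H) (nth [::] Ts 0)))%N.
  have MZ0 : (0 < M * Z)%N by rewrite muln_gt0 M0 Z0.
  have [l hl xin] := Hcov (Ordinal MZ0).
  have [e _] := Hlay l hl.
  have : (0 < size (nth [::] Ts l))%N by case: (nth [::] Ts l) xin.
  rewrite e => n0pos.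
  have [j0 hj0] := Hnz (t (Ordinal n0pos)).
  apply: leq_trans (leq_bigmax j0); rewrite Fcw (bigD1 (Ordinal n0pos)) //=.
  apply: leq_trans (leq_addr _ _); rewrite lt0n.
  rewrite /s (bigD1 (Ordinal k1)) //= /c /= mul0n shift0 //.
  by move: hj0; case: (H _ j0 != 0).
rewrite Step1 omega_le.
split.
- move=> Hj.
  have Hj' : forall j, (\sum_r s r j <= 1)%N by move=> j; rewrite -Fst.
  have Hs : forall r j, (s r j <= 1)%N.
    by move=> r j; apply: leq_trans (Hj' j); rewrite (bigD1 r) //= leq_addr.
  split.
  + move=> r j; rewrite Fsum; have := Hs r j; case: (s r j) => [|[|]] //=; by [left|right].
  + apply/eqP; rewrite eqn_leq Fpos andbT; apply/omega_le => j.
    rewrite Fcw; apply: leq_trans (Hj' j); apply: leq_sum => r _; by case: (s r j).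
- move=> [Hb Ho] j; rewrite Fst.
  have -> : (\sum_r s r j = \sum_r (s r j != 0%N))%N.
    apply: eq_bigr => r _; have := Hb r j; rewrite Fsum.
    by case: (s r j) => [|[|n]] //= [].
  by rewrite -Fcw -Ho; exact: (leq_bigmax j).
Qed.
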